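(* Let $\mathcal{H}$ be an LSH family on $\mathbb{R}^d$ with finite range $\{1,\dots,R\}$ and collision probability $k(x,y)=\Pr_{h\sim\mathcal{H}}[h(x)=h(y)]$. Fix an integer $p\ge 1$, a dataset $\mathcal{D}\subset\mathbb{R}^d$ with $N=|\mathcal{D}|$, a query $q$, and $\epsilon,\delta\in(0,1)$. Define $$K(q)=\frac1N\sum_{x\in\mathcal{D}}k^p(x,q),\qquad \widetilde K(q)=\frac1N\sum_{x\in\mathcal{D}}k^{p/2}(x,q),$$ and assume $K(q)>0$. Then there are absolute constants $c_1,c_2>0$ such that a RACE sketch with $L=g\cdot m$ rows, where $g\ge c_1\log(1/\delta)$ and $m\ge c_2\left(\widetilde K(q)/K(q)\right)^2\epsilon^{-2}$ (so $L=O\!\left(\left(\frac{\widetilde K(q)}{K(q)}\right)^2\frac{1}{\epsilon^2}\log\frac1\delta\right)$), yields a median-of-means estimate $\widehat K(q)$ satisfying $(1-\epsilon)K(q)\le \widehat K(q)\le(1+\epsilon)K(q)$ with probability at least $1-\delta$. The sketch consists of $O(LR^p)$ integer counters.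
   Context: RACE sketch: choose $L$ independent hash functions $h_1,\dots,h_L$, each obtained by concatenating $p$ independent draws from $\mathcal{H}$, so each $h_l$ maps into a set of size $R^p$ and $\Pr[h_l(x)=h_l(y)]=k^p(x,y)$. The sketch is an integer array $A$ with $L$ rows and $R^p$ columns, initialized to zero; for each $x\in\mathcal{D}$ and each $l=1,\dots,L$, the counter $A[l,h_l(x)]$ is incremented by one. Median-of-means query: partition the $L$ rows into $g$ groups of $m$ rows each; for each group compute the average of $A[l,h_l(q)]/N$ over the rows $l$ in the group; output $\widehat K(q)$ as the median of these $g$ group averages. *)

(* Defs.v *)
From Stdlib Require Import Reals List Arith.
Import ListNotations.
Open Scope R_scope.

Definition Rsum (l : list R) : R := fold_right Rplus 0 l.
Definition Rprod (l : list R) : R := fold_right Rmult 1 l.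

(** An LSH family, given as a finitely supported distribution:
    hash function [hs i] is drawn with probability [w i], for [i < n]. *)
Definition collision (n : nat) (hs : nat -> list R -> nat) (w : nat -> R)
  (x y : list R) : R :=
  Rsum (map (fun i => w i * (if Nat.eq_dec (hs i x) (hs i y) then 1 else 0))
            (seq 0 n)).

Definition Kp n hs w (p : nat) (D : list (list R)) (q : list R) : R :=
  / INR (length D) * Rsum (map (fun x => (collision n hs w x q) ^ p) D).
Definition Ktilde n hs w (p : nat) (D : list (list R)) (q : list R) : R :=
  / INR (length D) * Rsum (map (fun x => sqrt ((collision n hs w x q) ^ p)) D).

Fixpoint all_seqs (n k : nat) : list (list nat) :=
  match k with
  | O => [[]]
  | S k' => flat_map (fun s => map (fun i => i :: s) (seq 0 n)) (all_seqs n k')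
  end.

(** A draw [sigma] (length L*p) fixes all L*p independent hash draws;
    draw j of row l is entry l*p+j.  The row hash h_l is the concatenation
    (tuple) of its p draws; its value is a column index in [R]^p. *)
Definition row_hash (hs : nat -> list R -> nat) (p : nat) (sigma : list nat)
  (l : nat) (x : list R) : list nat :=
  map (fun j => hs (nth (l * p + j) sigma 0%nat) x) (seq 0 p).

Definition counter hs p (D : list (list R)) sigma (l : nat) (c : list nat) : nat :=
  length (filter (fun x => if list_eq_dec Nat.eq_dec (row_hash hs p sigma l x) c
                           then true else false) D).

Fixpoint insertR (x : R) (l : list R) : list R :=
  match l with
  | [] => [x]
  | y :: t => if Rle_dec x y then x :: y :: t else y :: insertR x t
  end.
Definition sortR (l : list R) : list R := fold_right insertR [] l.
Definition median (l : list R) : R := nth (length l / 2) (sortR l) 0.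

Definition group_mean hs p (D : list (list R)) (q : list R) sigma (m j : nat) : R :=
  / INR m * Rsum (map (fun i => let l := (j * m + i)%nat in
       INR (counter hs p D sigma l (row_hash hs p sigma l q)) / INR (length D))
     (seq 0 m)).
Definition race_estimate hs p D q sigma (g m : nat) : R :=
  median (map (group_mean hs p D q sigma m) (seq 0 g)).

Definition prob_draws (n : nat) (w : nat -> R) (len : nat)
  (E : list nat -> Prop) (Edec : forall s, {E s} + {~ E s}) : R :=
  Rsum (map (fun s => Rprod (map w s) * (if Edec s then 1 else 0))
            (all_seqs n len)).

Definition within_eps hs p D q (g m : nat) (eps Kq : R) (s : list nat) : Prop :=
  (1 - eps) * Kq <= race_estimate hs p D q s g m <= (1 + eps) * Kq.

Lemma within_eps_dec hs p D q g m eps Kq :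
  forall s, {within_eps hs p D q g m eps Kq s} + {~ within_eps hs p D q g m eps Kq s}.
Proof.
  intro s; unfold within_eps.
  destruct (Rle_dec ((1 - eps) * Kq) (race_estimate hs p D q s g m)) as [H1|H1];
  destruct (Rle_dec (race_estimate hs p D q s g m) ((1 + eps) * Kq)) as [H2|H2];
  [left; split; assumption | right; intros [_ H]; contradiction
  | right; intros [H _]; contradiction | right; intros [H _]; contradiction].
Defined.

(* Main.v *)
Require Import Defs.
From Stdlib Require Import Reals List Arith.
From Stdlib Require Import Lia Lra Sorting.
Import ListNotations.
Open Scope R_scope.

Lemma Rsum_cons a l : Rsum (a :: l) = a + Rsum l.
Proof. reflexivity. Qed.

Lemma Rsum_app l1 l2 : Rsum (l1 ++ l2) = Rsum l1 + Rsum l2.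
Proof. induction l1; simpl; [ring | rewrite IHl1; ring]. Qed.

Lemma Rsum_plus {A} (f g : A -> R) l :
  Rsum (map (fun x => f x + g x) l) = Rsum (map f l) + Rsum (map g l).
Proof. induction l; simpl; [ring | rewrite IHl; ring]. Qed.

Lemma Rsum_scal {A} (c : R) (f : A -> R) l :
  Rsum (map (fun x => c * f x) l) = c * Rsum (map f l).
Proof. induction l; simpl; [ring | rewrite IHl; ring]. Qed.

Lemma Rsum_ext {A} (f g : A -> R) l :
  (forall x, In x l -> f x = g x) -> Rsum (map f l) = Rsum (map g l).
Proof. intro H. f_equal. apply map_ext_in. exact H. Qed.

Lemma Rsum_le {A} (f g : A -> R) l :
  (forall x, In x l -> f x <= g x) -> Rsum (map f l) <= Rsum (map g l).
Proof.
  induction l; simpl; intros H; [lra|].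
  apply Rplus_le_compat; auto.
Qed.

Lemma Rsum_const {A} (c : R) (l : list A) :
  Rsum (map (fun _ => c) l) = INR (length l) * c.
Proof. induction l; simpl length; [simpl; ring| rewrite S_INR; simpl; rewrite IHl; ring]. Qed.

Lemma Rsum_flat_map {A B} (h : B -> R) (f : A -> list B) l :
  Rsum (map h (flat_map f l)) = Rsum (map (fun a => Rsum (map h (f a))) l).
Proof. induction l; simpl; [ring| rewrite map_app, Rsum_app, IHl; ring]. Qed.

Lemma Rsum_mult {A B} (f : A -> R) (g : B -> R) l l' :
  Rsum (map f l) * Rsum (map g l') =
  Rsum (map (fun x => Rsum (map (fun y => f x * g y) l')) l).
Proof.
  induction l; simpl; [ring|]. rewrite <- IHl, Rsum_scal. ring.
Qed.

Fixpoint Ex (n : nat) (w : nat -> R) (k : nat) (F : list nat -> R) : R :=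
  match k with
  | O => F []
  | S k => Rsum (map (fun i => w i * Ex n w k (fun s => F (i :: s))) (seq 0 n))
  end.

Lemma Ex_ext n w k F G : (forall s, F s = G s) -> Ex n w k F = Ex n w k G.
Proof.
  revert F G; induction k; intros F G H; simpl; auto.
  apply Rsum_ext; intros i _. f_equal. apply IHk. intros; apply H.
Qed.

Lemma Ex_plus n w k F G : Ex n w k (fun s => F s + G s) = Ex n w k F + Ex n w k G.
Proof.
  revert F G; induction k; intros F G; simpl; auto.
  rewrite <- Rsum_plus. apply Rsum_ext; intros i _.
  rewrite (IHk (fun s => F (i :: s)) (fun s => G (i :: s))). ring.
Qed.

Lemma Ex_scal n w k c F : Ex n w k (fun s => c * F s) = c * Ex n w k F.
Proof.
  revert F; induction k; intros F; simpl; auto.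
  rewrite <- Rsum_scal. apply Rsum_ext; intros i _.
  rewrite (IHk (fun s => F (i :: s))). ring.
Qed.

Lemma Ex_const n w k c : Rsum (map w (seq 0 n)) = 1 -> Ex n w k (fun _ => c) = c.
Proof.
  intro H1; induction k; simpl; auto.
  rewrite IHk. rewrite (Rsum_ext _ (fun i => c * w i)) by (intros; ring).
  rewrite Rsum_scal, H1. ring.
Qed.

Lemma Ex_le n w k F G : (forall i, (i < n)%nat -> 0 <= w i) ->
  (forall s, F s <= G s) -> Ex n w k F <= Ex n w k G.
Proof.
  intros Hw; revert F G; induction k; intros F G H; simpl; auto.
  apply Rsum_le; intros i Hi. apply in_seq in Hi.
  apply Rmult_le_compat_l. apply Hw; lia. apply IHk. intros; apply H.
Qed.

Lemma Ex_minus n w k F G : Ex n w k (fun s => F s - G s) = Ex n w k F - Ex n w k G.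
Proof.
  unfold Rminus. rewrite Ex_plus.
  rewrite (Ex_ext _ _ _ (fun s => - G s) (fun s => (-1) * G s)) by (intros; ring).
  rewrite Ex_scal. ring.
Qed.

Lemma Ex_Rsum {A} n w k (G : A -> list nat -> R) l :
  Ex n w k (fun s => Rsum (map (fun i => G i s) l)) = Rsum (map (fun i => Ex n w k (G i)) l).
Proof.
  induction l; simpl.
  - rewrite (Ex_ext _ _ _ _ (fun s => 0 * 0)) by (intros; ring).
    rewrite Ex_scal. ring.
  - rewrite Ex_plus, IHl. reflexivity.
Qed.

Lemma Ex_prod n w a b F G :
  Ex n w (a + b) (fun s => F (firstn a s) * G (skipn a s)) = Ex n w a F * Ex n w b G.
Proof.
  revert F; induction a; intros F.
  - simpl. apply Ex_scal.
  - simpl. rewrite Rmult_comm, <- Rsum_scal. apply Rsum_ext; intros i _.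
    rewrite (IHa (fun t => F (i :: t))). ring.
Qed.

Lemma prob_Ex_gen n w k F :
  Rsum (map (fun s => Rprod (map w s) * F s) (all_seqs n k)) = Ex n w k F.
Proof.
  revert F; induction k; intros F.
  - simpl. ring.
  - simpl all_seqs. rewrite Rsum_flat_map.
    rewrite (Rsum_ext _ (fun s => Rprod (map w s) *
        Rsum (map (fun i => w i * F (i :: s)) (seq 0 n)))).
    + rewrite IHk. simpl. rewrite Ex_Rsum. apply Rsum_ext; intros i _.
      apply Ex_scal.
    + intros s _. rewrite map_map, <- Rsum_scal. apply Rsum_ext; intros i _.
      simpl. ring.
Qed.

Lemma prob_Ex n w len E Edec :
  prob_draws n w len E Edec = Ex n w len (fun s => if Edec s then 1 else 0).
Proof. apply prob_Ex_gen. Qed.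

Lemma filter_insertR (f : R -> bool) x l :
  length (filter f (insertR x l)) = ((if f x then 1 else 0) + length (filter f l))%nat.
Proof.
  induction l as [|y t IH]; simpl.
  - destruct (f x); reflexivity.
  - destruct (Rle_dec x y); simpl.
    + destruct (f x), (f y); simpl; lia.
    + destruct (f y); simpl; rewrite IH; destruct (f x); simpl; lia.
Qed.

Lemma filter_sortR (f : R -> bool) l :
  length (filter f (sortR l)) = length (filter f l).
Proof.
  induction l as [|x t IH]; simpl; auto.
  rewrite filter_insertR, IH. destruct (f x); reflexivity.
Qed.

Lemma length_insertR x l : length (insertR x l) = S (length l).
Proof. induction l; simpl; auto. destruct (Rle_dec x a); simpl; auto. Qed.

Lemma length_sortR l : length (sortR l) = length l.
Proof. induction l; simpl; auto. rewrite length_insertR; auto. Qed.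

Lemma Forall_insertR (P : R -> Prop) x l : P x -> Forall P l -> Forall P (insertR x l).
Proof.
  intros Hx Hl; induction Hl; simpl; auto.
  destruct (Rle_dec x x0); auto.
Qed.

Lemma sorted_insertR x l : StronglySorted Rle l -> StronglySorted Rle (insertR x l).
Proof.
  induction 1 as [|y t Ht IH Hf]; simpl.
  - repeat constructor.
  - destruct (Rle_dec x y) as [Hxy|Hxy].
    + constructor. constructor; auto. constructor; auto.
      eapply Forall_impl; [|exact Hf]. simpl; intros; lra.
    + constructor; auto. apply Forall_insertR; auto. lra.
Qed.

Lemma sorted_sortR l : StronglySorted Rle (sortR l).
Proof. induction l; simpl; [constructor| apply sorted_insertR; auto]. Qed.

Lemma count_low (a : R) l k : StronglySorted Rle l -> (k < length l)%nat ->
  nth k l 0 < a ->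
  (k + 1 <= length (filter (fun v => if Rlt_dec v a then true else false) l))%nat.
Proof.
  revert k; induction l as [|y t IH]; intros k Hs Hk Hn; simpl in *; [lia|].
  inversion Hs; subst.
  destruct k as [|k].
  - destruct (Rlt_dec y a); [simpl; lia| contradiction].
  - assert (Hy : y <= nth k t 0).
    { rewrite Forall_forall in H2. apply H2. apply nth_In. lia. }
    destruct (Rlt_dec y a); [|lra]. simpl.
    specialize (IH k H1 ltac:(lia) Hn). lia.
Qed.

Lemma filter_all {A} (f : A -> bool) l : Forall (fun z => f z = true) l ->
  length (filter f l) = length l.
Proof. induction 1; simpl; auto. rewrite H; simpl; lia. Qed.

Lemma count_high (b : R) l k : StronglySorted Rle l -> (k < length l)%nat ->
  b < nth k l 0 ->
  (length l - k <= length (filter (fun v => if Rlt_dec b v then true else false) l))%nat.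
Proof.
  revert k; induction l as [|y t IH]; intros k Hs Hk Hn; simpl in *; [lia|].
  inversion Hs; subst.
  destruct k as [|k].
  - destruct (Rlt_dec b y); [|contradiction]. simpl.
    rewrite filter_all; [lia|].
    eapply Forall_impl; [|exact H2]. simpl; intros z Hz.
    destruct (Rlt_dec b z); auto; lra.
  - specialize (IH k H1 ltac:(lia) Hn).
    destruct (Rlt_dec b y); simpl; lia.
Qed.

Lemma filter_mono {A} (f g : A -> bool) l : (forall x, f x = true -> g x = true) ->
  (length (filter f l) <= length (filter g l))%nat.
Proof.
  intro H; induction l; simpl; auto.
  destruct (f a) eqn:E; [rewrite (H a E); simpl; lia|].
  destruct (g a); simpl; lia.
Qed.

Definition okb (a b v : R) : bool :=
  if Rle_dec a v then if Rle_dec v b then true else false else false.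

Lemma median_bad a b l : ~ (a <= median l <= b) ->
  (length l <= 2 * length (filter (fun v => negb (okb a b v)) l))%nat.
Proof.
  intro H. destruct (Nat.eq_dec (length l) 0) as [E|E]; [lia|].
  unfold median in H.
  set (k := (length l / 2)%nat) in *.
  assert (Hk : (k < length (sortR l))%nat).
  { rewrite length_sortR. unfold k. apply Nat.div_lt; lia. }
  assert (Hk2 : (2 * k <= length l)%nat) by (unfold k; apply Nat.mul_div_le; lia).
  destruct (Rlt_dec (nth k (sortR l) 0) a) as [Hlt|Hlt].
  - pose proof (count_low a _ k (sorted_sortR l) Hk Hlt) as C.
    rewrite filter_sortR in C.
    assert (M := filter_mono (fun v => if Rlt_dec v a then true else false)
                   (fun v => negb (okb a b v)) l).
    assert (length l < 2 * k + 2)%nat.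
    { unfold k. pose proof (Nat.div_mod (length l) 2). pose proof (Nat.mod_upper_bound (length l) 2). lia. }
    enough ((k + 1 <= length (filter (fun v => negb (okb a b v)) l))%nat) by lia.
    etransitivity; [exact C| apply M].
    intros x. unfold okb. destruct (Rlt_dec x a); [|discriminate].
    destruct (Rle_dec a x); [lra|auto].
  - assert (Hgt : b < nth k (sortR l) 0) by (destruct (Rle_dec (nth k (sortR l) 0) b); lra).
    pose proof (count_high b _ k (sorted_sortR l) Hk Hgt) as C.
    rewrite filter_sortR, length_sortR in C.
    assert (M := filter_mono (fun v => if Rlt_dec b v then true else false)
                   (fun v => negb (okb a b v)) l).
    enough ((length l - k <= length (filter (fun v => negb (okb a b v)) l))%nat) by lia.
    etransitivity; [exact C| apply M].
    intros x. unfold okb. destruct (Rlt_dec b x); [|discriminate].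
    destruct (Rle_dec a x); auto. destruct (Rle_dec x b); [lra|auto].
Qed.

Definition fok (a b v : R) : R := if okb a b v then 1 else 16.

Lemma prod_fok a b l :
  Rprod (map (fok a b) l) = 16 ^ length (filter (fun v => negb (okb a b v)) l).
Proof.
  induction l; simpl; auto. rewrite IHl. unfold fok.
  destruct (okb a b a0); simpl; ring.
Qed.

Lemma median_prod a b l : ~ (a <= median l <= b) ->
  4 ^ length l <= Rprod (map (fok a b) l).
Proof.
  intro H. rewrite prod_fok. apply median_bad in H.
  replace 16 with (4 ^ 2) by ring. rewrite <- pow_mult.
  apply Rle_pow; [lra| lia].
Qed.

Lemma var_bound n w p (Y : nat -> list nat -> R) K V :
  (forall i, (i < n)%nat -> 0 <= w i) -> Rsum (map w (seq 0 n)) = 1 ->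
  (forall i s, Y (S i) s = Y i (skipn p s)) ->
  (forall s, Y 0%nat s = Y 0%nat (firstn p s)) ->
  Ex n w p (Y 0%nat) = K -> Ex n w p (fun s => Y 0%nat s ^ 2) <= V ->
  forall m, Ex n w (m * p) (fun s => Rsum (map (fun i => Y i s - K) (seq 0 m)) ^ 2) <= INR m * V.
Proof.
  intros Hw H1 Hsh Hf HK HV.
  assert (HA : Ex n w p (fun t => Y 0%nat t - K) = 0).
  { rewrite Ex_minus, Ex_const by auto. lra. }
  assert (HA2 : Ex n w p (fun t => (Y 0%nat t - K) ^ 2) <= V).
  { rewrite (Ex_ext _ _ _ _ (fun t => Y 0%nat t ^ 2 - (2 * K) * Y 0%nat t + K ^ 2)) by (intros; ring).
    rewrite Ex_plus, Ex_minus, Ex_scal, Ex_const, HK by auto. nra. }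
  induction m as [|m IH].
  - simpl. lra.
  - set (B := fun t => Rsum (map (fun i => Y i t - K) (seq 0 m))).
    set (A := fun t => Y 0%nat t - K).
    assert (E : forall s, Rsum (map (fun i => Y i s - K) (seq 0 (S m))) =
                          A (firstn p s) + B (skipn p s)).
    { intro s. simpl seq. rewrite <- seq_shift. simpl map. rewrite map_map. simpl.
      unfold A, B. rewrite <- Hf. f_equal. apply Rsum_ext. intros i _.
      rewrite Hsh. reflexivity. }
    change (S m * p)%nat with (p + m * p)%nat.
    rewrite (Ex_ext _ _ _ _ (fun s =>
       ((fun t => A t ^ 2) (firstn p s) * (fun _ => 1) (skipn p s)
        + 2 * (A (firstn p s) * B (skipn p s)))
       + (fun _ => 1) (firstn p s) * (fun t => B t ^ 2) (skipn p s))).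
    2:{ intro s. rewrite E. simpl. ring. }
    rewrite !Ex_plus, Ex_scal.
    rewrite (Ex_prod n w p (m * p) (fun t => A t ^ 2) (fun _ => 1)).
    rewrite (Ex_prod n w p (m * p) A B).
    rewrite (Ex_prod n w p (m * p) (fun _ => 1) (fun t => B t ^ 2)).
    rewrite !Ex_const by auto.
    unfold A at 2. rewrite HA. fold B in IH. unfold A.
    assert (IH2 : Ex n w (m * p) (fun t => B t ^ 2) <= INR m * V) by exact IH.
    rewrite S_INR. lra.
Qed.

Definition Y hs p D q (l : nat) (s : list nat) : R :=
  INR (counter hs p D s l (row_hash hs p s l q)) / INR (length D).
Definition GM hs p D q (m : nat) (s : list nat) : R :=
  / INR m * Rsum (map (fun i => Y hs p D q i s) (seq 0 m)).

Lemma row_hash_shift hs p s a l x :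
  row_hash hs p s (a + l) x = row_hash hs p (skipn (a * p) s) l x.
Proof.
  unfold row_hash. apply map_ext; intro j. rewrite nth_skipn.
  f_equal. f_equal. nia.
Qed.

Lemma row_hash_firstn hs p s k l x : (l * p + p <= k)%nat ->
  row_hash hs p s l x = row_hash hs p (firstn k s) l x.
Proof.
  intro H. unfold row_hash. apply map_ext_in; intros j Hj. apply in_seq in Hj.
  rewrite nth_firstn. destruct (Nat.ltb_spec (l * p + j) k); [reflexivity| lia].
Qed.

Lemma Y_ext hs p D q s s' l l' : (forall x, row_hash hs p s l x = row_hash hs p s' l' x) ->
  Y hs p D q l s = Y hs p D q l' s'.
Proof.
  intro H. unfold Y, counter. rewrite !H.
  rewrite (filter_ext _ (fun x => if list_eq_dec Nat.eq_dec (row_hash hs p s' l' x) (row_hash hs p s' l' q) then true else false)).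
  reflexivity. intro x. rewrite H. reflexivity.
Qed.

Lemma group_mean_GM hs p D q s m j :
  group_mean hs p D q s m j = GM hs p D q m (skipn (j * m * p) s).
Proof.
  unfold group_mean, GM. f_equal. apply Rsum_ext; intros i _.
  apply (Y_ext hs p D q s _ (j * m + i) i). intro x. apply row_hash_shift.
Qed.

Lemma GM_firstn hs p D q m s : GM hs p D q m s = GM hs p D q m (firstn (m * p) s).
Proof.
  unfold GM. f_equal. apply Rsum_ext; intros i Hi. apply in_seq in Hi.
  apply Y_ext. intro x. apply row_hash_firstn. nia.
Qed.

Lemma Y_shift hs p D q i s : Y hs p D q (S i) s = Y hs p D q i (skipn p s).
Proof.
  apply Y_ext. intro x. pose proof (row_hash_shift hs p s 1 i x) as E.
  rewrite Nat.mul_1_l in E. exact E.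
Qed.

Lemma Y_first hs p D q s : Y hs p D q 0 s = Y hs p D q 0 (firstn p s).
Proof. apply Y_ext. intro x. apply row_hash_firstn. lia. Qed.

Definition Ind hs p q (x : list R) (s : list nat) : R :=
  if list_eq_dec Nat.eq_dec (row_hash hs p s 0 x) (row_hash hs p s 0 q) then 1 else 0.

Lemma counter_sum hs p D s l c :
  INR (counter hs p D s l c) =
  Rsum (map (fun x => if list_eq_dec Nat.eq_dec (row_hash hs p s l x) c then 1 else 0) D).
Proof.
  unfold counter. induction D as [|x D IH]; simpl; auto.
  destruct (list_eq_dec Nat.eq_dec (row_hash hs p s l x) c); simpl length; [rewrite S_INR|]; lra.
Qed.

Lemma Y0_sum hs p D q s :
  Y hs p D q 0 s = / INR (length D) * Rsum (map (fun x => Ind hs p q x s) D).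
Proof. unfold Y. rewrite counter_sum. unfold Rdiv. rewrite Rmult_comm. reflexivity. Qed.

Lemma ind_prod (a b : nat -> nat) l :
  (if list_eq_dec Nat.eq_dec (map a l) (map b l) then 1 else 0) =
  Rprod (map (fun j => if Nat.eq_dec (a j) (b j) then 1 else 0) l).
Proof.
  induction l as [|j l IH].
  - destruct (list_eq_dec Nat.eq_dec (map a []) (map b [])) as [_|N]; [reflexivity| simpl in N; congruence].
  - change (map a (j::l)) with (a j :: map a l). change (map b (j::l)) with (b j :: map b l).
    change (Rprod (map ?f (j::l))) with (f j * Rprod (map f l)).
    rewrite <- IH.
    destruct (Nat.eq_dec (a j) (b j)) as [E|E];
    destruct (list_eq_dec Nat.eq_dec (map a l) (map b l)) as [E2|E2];
    destruct (list_eq_dec Nat.eq_dec (a j :: map a l) (b j :: map b l)) as [E3|E3];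
    try ring; try (exfalso; apply E3; congruence); try (exfalso; inversion E3; congruence).
Qed.

Lemma Ex_prod_nth n w (phi : nat -> R) k :
  Ex n w k (fun s => Rprod (map (fun t => phi (nth t s 0%nat)) (seq 0 k))) =
  (Rsum (map (fun i => w i * phi i) (seq 0 n))) ^ k.
Proof.
  induction k.
  - reflexivity.
  - simpl Ex. simpl pow. rewrite Rmult_comm, <- Rsum_scal. apply Rsum_ext; intros i _.
    rewrite (Ex_ext _ _ _ _ (fun s => phi i * Rprod (map (fun t => phi (nth t s 0%nat)) (seq 0 k)))).
    + rewrite Ex_scal, IHk. ring.
    + intro s. simpl seq. rewrite <- seq_shift. simpl. rewrite map_map. reflexivity.
Qed.

Lemma Ex_Ind n w hs p q x :
  Ex n w p (Ind hs p q x) = collision n hs w x q ^ p.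
Proof.
  unfold collision. rewrite <- Ex_prod_nth.
  apply Ex_ext. intro s. unfold Ind, row_hash. simpl.
  rewrite ind_prod. reflexivity.
Qed.

Lemma collision_bounds n hs w x y :
  (forall i, (i < n)%nat -> 0 <= w i) -> Rsum (map w (seq 0 n)) = 1 ->
  0 <= collision n hs w x y <= 1.
Proof.
  intros Hw H1. unfold collision. split.
  - apply Rle_trans with (Rsum (map (fun _ : nat => 0) (seq 0 n))).
    + rewrite Rsum_const. lra.
    + apply Rsum_le. intros i Hi. apply in_seq in Hi.
      specialize (Hw i ltac:(lia)). destruct (Nat.eq_dec (hs i x) (hs i y)); nra.
  - rewrite <- H1. apply Rsum_le. intros i Hi. apply in_seq in Hi.
    specialize (Hw i ltac:(lia)). destruct (Nat.eq_dec (hs i x) (hs i y)); nra.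
Qed.

Lemma Ex_Y0 n w hs p D q :
  Ex n w p (Y hs p D q 0) = Kp n hs w p D q.
Proof.
  rewrite (Ex_ext _ _ _ _ _ (Y0_sum hs p D q)).
  rewrite Ex_scal, Ex_Rsum. unfold Kp. f_equal.
  apply Rsum_ext. intros x _. apply Ex_Ind.
Qed.

Lemma min_sqrt u a b : 0 <= a -> 0 <= b -> u <= a -> u <= b -> u <= sqrt a * sqrt b.
Proof.
  intros Ha Hb H1 H2.
  destruct (Rle_dec a b).
  - assert (sqrt a <= sqrt b) by (apply sqrt_le_1_alt; lra).
    pose proof (sqrt_sqrt a Ha). pose proof (sqrt_pos a). nra.
  - assert (sqrt b <= sqrt a) by (apply sqrt_le_1_alt; lra).
    pose proof (sqrt_sqrt b Hb). pose proof (sqrt_pos b). nra.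
Qed.

Lemma Ind01 hs p q x s : Ind hs p q x s = 0 \/ Ind hs p q x s = 1.
Proof. unfold Ind. destruct (list_eq_dec _ _ _); auto. Qed.

Lemma Ex_Y0sq n w hs p D q :
  (forall i, (i < n)%nat -> 0 <= w i) -> Rsum (map w (seq 0 n)) = 1 ->
  Ex n w p (fun s => Y hs p D q 0 s ^ 2) <= Ktilde n hs w p D q ^ 2.
Proof.
  intros Hw H1.
  set (N := / INR (length D)).
  rewrite (Ex_ext _ _ _ _ (fun s => (N * N) *
     Rsum (map (fun x => Rsum (map (fun y => Ind hs p q x s * Ind hs p q y s) D)) D))).
  2:{ intro s. rewrite Y0_sum. fold N. rewrite <- Rsum_mult. ring. }
  rewrite Ex_scal, Ex_Rsum.
  unfold Ktilde. fold N.
  replace ((N * Rsum (map (fun x => sqrt (collision n hs w x q ^ p)) D)) ^ 2)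
    with ((N * N) * Rsum (map (fun x => Rsum (map (fun y =>
          sqrt (collision n hs w x q ^ p) * sqrt (collision n hs w y q ^ p)) D)) D))
    by (rewrite <- Rsum_mult; ring).
  apply Rmult_le_compat_l. { unfold N. pose proof (pos_INR (length D)).
    destruct (Req_dec (INR (length D)) 0) as [E|E]; [rewrite E, Rinv_0; lra|].
    assert (0 < / INR (length D)) by (apply Rinv_0_lt_compat; lra). nra. }
  apply Rsum_le; intros x _. rewrite Ex_Rsum. apply Rsum_le; intros y _.
  assert (Hc : forall z, 0 <= collision n hs w z q ^ p).
  { intro z. apply pow_le. apply collision_bounds; auto. }
  apply min_sqrt; auto.
  - rewrite <- Ex_Ind. apply Ex_le; auto. intro s.
    destruct (Ind01 hs p q x s) as [E|E]; rewrite E;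
    destruct (Ind01 hs p q y s) as [E'|E']; rewrite E'; lra.
  - rewrite <- Ex_Ind. apply Ex_le; auto. intro s.
    destruct (Ind01 hs p q x s) as [E|E]; rewrite E;
    destruct (Ind01 hs p q y s) as [E'|E']; rewrite E'; lra.
Qed.

Lemma Kp_le_Kt n hs w p D q :
  (forall i, (i < n)%nat -> 0 <= w i) -> Rsum (map w (seq 0 n)) = 1 ->
  Kp n hs w p D q <= Ktilde n hs w p D q.
Proof.
  intros Hw H1. unfold Kp, Ktilde.
  pose proof (pos_INR (length D)).
  destruct (Req_dec (INR (length D)) 0) as [E|E]; [rewrite E, Rinv_0; lra|].
  apply Rmult_le_compat_l. { left; apply Rinv_0_lt_compat; lra. }
  apply Rsum_le; intros x _.
  destruct (collision_bounds n hs w x q Hw H1) as [c0 c1].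
  set (u := collision n hs w x q ^ p).
  assert (0 <= u) by (apply pow_le; auto).
  assert (u <= 1) by (unfold u; rewrite <- (pow1 p); apply pow_incr; lra).
  pose proof (sqrt_sqrt u H0). pose proof (sqrt_pos u).
  assert (sqrt u <= 1) by (rewrite <- sqrt_1; apply sqrt_le_1_alt; lra).
  nra.
Qed.

Lemma Ex_blocks n w k (Phi : list nat -> R) :
  (forall s, Phi s = Phi (firstn k s)) ->
  forall g, Ex n w (g * k) (fun s => Rprod (map (fun j => Phi (skipn (j * k) s)) (seq 0 g)))
            = (Ex n w k Phi) ^ g.
Proof.
  intros Hf g. induction g.
  - reflexivity.
  - change (S g * k)%nat with (k + g * k)%nat.
    rewrite (Ex_ext _ _ _ _ (fun s => Phi (firstn k s) *
       (fun t => Rprod (map (fun j => Phi (skipn (j * k) t)) (seq 0 g))) (skipn k s))).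
    + rewrite (Ex_prod n w k (g * k) Phi (fun t => Rprod (map (fun j => Phi (skipn (j * k) t)) (seq 0 g)))), IHg. reflexivity.
    + intro s. simpl seq. rewrite <- seq_shift. simpl map. rewrite map_map.
      change (Rprod (?a :: ?l)) with (a * Rprod l). rewrite <- Hf.
      f_equal. f_equal. apply map_ext. intro j. rewrite skipn_skipn.
      do 2 f_equal. lia.
Qed.

Lemma Rprod_nonneg l : Forall (fun x => 0 <= x) l -> 0 <= Rprod l.
Proof. induction 1; simpl; [lra| apply Rmult_le_pos; auto]. Qed.

Lemma fok_nonneg a b v : 0 <= fok a b v.
Proof. unfold fok. destruct (okb a b v); lra. Qed.

Lemma sum_minus_const (f : nat -> R) c m :
  Rsum (map (fun i => f i - c) (seq 0 m)) = Rsum (map f (seq 0 m)) - INR m * c.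
Proof.
  unfold Rminus. rewrite Rsum_plus, Rsum_const, length_seq. ring.
Qed.

Lemma main_proof (d n : nat) (hs : nat -> list R -> nat) (w : nat -> R) (r p : nat)
         (D : list (list R)) (q : list R) (eps delta : R) (g m : nat) :
    (forall i, (i < n)%nat -> 0 <= w i) ->
    Rsum (map w (seq 0 n)) = 1 ->
    0 < eps < 1 -> 0 < delta < 1 ->
    Kp n hs w p D q > 0 ->
    INR g >= / ln 2 * ln (1 / delta) ->
    INR m >= 16 * (Ktilde n hs w p D q / Kp n hs w p D q) ^ 2 / eps ^ 2 ->
    prob_draws n w (g * m * p)
      (within_eps hs p D q g m eps (Kp n hs w p D q))
      (within_eps_dec hs p D q g m eps (Kp n hs w p D q))
    >= 1 - delta.
Proof.
  intros Hw H1 Heps Hdel HK Hg Hm.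
  set (K := Kp n hs w p D q) in *.
  set (Kt := Ktilde n hs w p D q) in *.
  assert (HKt : K <= Kt) by (apply Kp_le_Kt; auto).
  set (a := (1 - eps) * K). set (b := (1 + eps) * K).
  assert (Hm16 : INR m * (eps ^ 2 * K ^ 2) >= 16 * Kt ^ 2).
  { assert (E : 16 * (Kt / K) ^ 2 / eps ^ 2 * (eps ^ 2 * K ^ 2) = 16 * Kt ^ 2)
      by (field; lra).
    rewrite <- E. apply Rmult_ge_compat_r; [|exact Hm].
    apply Rle_ge. apply Rmult_le_pos; apply pow_le; lra. }
  assert (Hmpos : 0 < INR m).
  { assert (0 < Kt ^ 2) by (apply pow_lt; lra).
    assert (0 < eps ^ 2 * K ^ 2) by (apply Rmult_lt_0_compat; apply pow_lt; lra).
    destruct (Rle_or_lt (INR m) 0) as [Hle|]; auto.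
    pose proof (pos_INR m). assert (INR m = 0) by lra. rewrite H3 in Hm16. lra. }
  pose proof (var_bound n w p (Y hs p D q) K (Kt ^ 2) Hw H1 (Y_shift hs p D q)
    (Y_first hs p D q) (Ex_Y0 n w hs p D q) (Ex_Y0sq n w hs p D q Hw H1) m) as Hvar.
  set (S := fun s => Rsum (map (fun i => Y hs p D q i s - K) (seq 0 m))) in Hvar.
  assert (HGM : forall s, GM hs p D q m s - K = / INR m * S s).
  { intro s. unfold GM, S. rewrite sum_minus_const. field. lra. }
  assert (Hbad : Ex n w (m * p) (fun s => if okb a b (GM hs p D q m s) then 0 else 1) <= / 16).
  { set (C := / (INR m ^ 2 * (eps * K) ^ 2)).
    assert (HC : 0 < C).
    { unfold C. apply Rinv_0_lt_compat. apply Rmult_lt_0_compat; apply pow_lt; nra. }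
    apply Rle_trans with (Ex n w (m * p) (fun s => C * S s ^ 2)).
    - apply Ex_le; auto. intro s.
      assert (E : C * S s ^ 2 = (GM hs p D q m s - K) ^ 2 / (eps * K) ^ 2).
      { rewrite HGM. unfold C. field. split; lra. }
      rewrite E. unfold okb.
      assert (Hek : 0 < (eps * K) ^ 2) by (apply pow_lt; nra).
      assert (Hge : forall v, (eps * K) ^ 2 <= v -> 1 <= v / (eps * K) ^ 2).
      { intros v Hv. unfold Rdiv. apply Rle_trans with ((eps * K) ^ 2 * / (eps * K) ^ 2).
        - rewrite Rinv_r; lra.
        - apply Rmult_le_compat_r; [left; apply Rinv_0_lt_compat|]; lra. }
      assert (H0 : 0 <= (GM hs p D q m s - K) ^ 2 / (eps * K) ^ 2).
      { unfold Rdiv. apply Rmult_le_pos; [apply pow2_ge_0| left; apply Rinv_0_lt_compat; lra]. }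
      assert (HeK : 0 < eps * K) by nra.
      assert (Hsq : forall v, eps * K < v - K \/ v - K < -(eps * K) -> (eps * K) ^ 2 <= (v - K) ^ 2).
      { intros v [Hv|Hv]; nra. }
      destruct (Rle_dec a (GM hs p D q m s)); [destruct (Rle_dec (GM hs p D q m s) b)|];
        auto; apply Hge; apply Hsq; unfold a, b in *; lra.
    - rewrite Ex_scal.
      apply Rle_trans with (C * (INR m * Kt ^ 2)).
      + apply Rmult_le_compat_l; [lra| exact Hvar].
      + unfold C.
        replace (/ (INR m ^ 2 * (eps * K) ^ 2) * (INR m * Kt ^ 2))
          with (Kt ^ 2 / (INR m * (eps ^ 2 * K ^ 2))) by (field; split; lra).
        assert (0 < INR m * (eps ^ 2 * K ^ 2)) by
          (apply Rmult_lt_0_compat; [lra| apply Rmult_lt_0_compat; apply pow_lt; lra]).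
        unfold Rdiv. apply (Rmult_le_reg_r (INR m * (eps ^ 2 * K ^ 2))); auto.
        rewrite Rmult_assoc, Rinv_l by lra. lra. }
  assert (Hfok : Ex n w (m * p) (fun s => fok a b (GM hs p D q m s)) <= 2).
  { rewrite (Ex_ext _ _ _ _ (fun s => 1 + 15 * (if okb a b (GM hs p D q m s) then 0 else 1))).
    - rewrite Ex_plus, Ex_scal, Ex_const by auto. lra.
    - intro s. unfold fok. destruct (okb a b _); ring. }
  assert (Hfok0 : 0 <= Ex n w (m * p) (fun s => fok a b (GM hs p D q m s))).
  { rewrite <- (Ex_const n w (m * p) 0 H1). apply Ex_le; auto. intro; apply fok_nonneg. }
  pose proof (Ex_blocks n w (m * p) (fun s => fok a b (GM hs p D q m s))
    (fun s => f_equal (fok a b) (GM_firstn hs p D q m s)) g) as Hbl.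
  set (P := fun s => Rprod (map (fun j => fok a b (GM hs p D q m (skipn (j * (m * p)) s))) (seq 0 g))) in Hbl.
  rewrite prob_Ex.
  assert (H4 : 0 < 4 ^ g) by (apply pow_lt; lra).
  apply Rle_ge.
  apply Rle_trans with (Ex n w (g * m * p) (fun s => 1 - / 4 ^ g * P s)).
  2:{ apply Ex_le; auto. intro s.
      assert (HP : 0 <= P s).
      { unfold P. apply Rprod_nonneg. apply Forall_forall. intros x Hx.
        apply in_map_iff in Hx. destruct Hx as [j [<- _]]. apply fok_nonneg. }
      destruct (within_eps_dec hs p D q g m eps K s) as [Hin|Hout].
      - assert (0 <= / 4 ^ g * P s) by (apply Rmult_le_pos; [left; apply Rinv_0_lt_compat|]; lra).
        lra.
      - unfold within_eps, race_estimate in Hout. fold a b in Hout.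
        apply median_prod in Hout.
        rewrite length_map, length_seq, map_map in Hout.
        assert (E : Rprod (map (fun x => fok a b (group_mean hs p D q s m x)) (seq 0 g)) = P s).
        { unfold P. f_equal. apply map_ext. intro j. rewrite group_mean_GM.
          rewrite Nat.mul_assoc. reflexivity. }
        rewrite E in Hout.
        assert (1 <= / 4 ^ g * P s).
        { apply Rle_trans with (/ 4 ^ g * 4 ^ g).
          - rewrite Rinv_l; lra.
          - apply Rmult_le_compat_l; [left; apply Rinv_0_lt_compat|]; lra. }
        lra. }
  rewrite Ex_minus, Ex_scal, Ex_const by auto.
  rewrite <- Nat.mul_assoc, Hbl.
  assert (H2g : (Ex n w (m * p) (fun s => fok a b (GM hs p D q m s))) ^ g <= 2 ^ g)
    by (apply pow_incr; lra).
  assert (Hdel2 : / 4 ^ g * 2 ^ g <= delta).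
  { replace (/ 4 ^ g * 2 ^ g) with (/ 2 ^ g).
    2:{ replace 4 with (2 * 2) by ring. rewrite Rpow_mult_distr. field.
        apply pow_nonzero; lra. }
    assert (Hln2 : 0 < ln 2) by (rewrite <- ln_1; apply ln_increasing; lra).
    assert (Hgl : INR g * ln 2 >= ln (1 / delta)).
    { apply Rge_trans with (/ ln 2 * ln (1 / delta) * ln 2).
      - apply Rmult_ge_compat_r; lra.
      - right. field. lra. }
    assert (E2 : 2 ^ g = exp (INR g * ln 2)) by (rewrite <- Rpower_pow by lra; reflexivity).
    assert (1 / delta <= 2 ^ g).
    { rewrite E2. rewrite <- (exp_ln (1 / delta)).
      - destruct (Req_dec (ln (1/delta)) (INR g * ln 2)) as [Eq|Neq]; [rewrite Eq; lra|].
        left. apply exp_increasing. lra.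
      - unfold Rdiv. apply Rmult_lt_0_compat; [lra| apply Rinv_0_lt_compat; lra]. }
    assert (0 < 2 ^ g) by (apply pow_lt; lra).
    apply (Rmult_le_reg_r (2 ^ g)); auto. rewrite Rinv_l by lra.
    apply (Rmult_le_reg_l (/ delta)). { apply Rinv_0_lt_compat; lra. }
    rewrite <- Rmult_assoc, Rinv_l by lra. lra. }
  assert (/ 4 ^ g * (Ex n w (m * p) (fun s => fok a b (GM hs p D q m s))) ^ g <= / 4 ^ g * 2 ^ g).
  { apply Rmult_le_compat_l; [left; apply Rinv_0_lt_compat; lra| exact H2g]. }
  lra.
Qed.

Theorem mainTheorem1 :
  exists c1 c2 : R, 0 < c1 /\ 0 < c2 /\
  forall (d n : nat) (hs : nat -> list R -> nat) (w : nat -> R) (r p : nat)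
         (D : list (list R)) (q : list R) (eps delta : R) (g m : nat),
    (forall i, (i < n)%nat -> 0 <= w i) ->
    Rsum (map w (seq 0 n)) = 1 ->
    (forall i x, (i < n)%nat -> length x = d -> (1 <= hs i x <= r)%nat) ->
    (1 <= p)%nat ->
    NoDup D ->
    Forall (fun x => length x = d) D ->
    length q = d ->
    0 < eps < 1 -> 0 < delta < 1 ->
    Kp n hs w p D q > 0 ->
    INR g >= c1 * ln (1 / delta) ->
    INR m >= c2 * (Ktilde n hs w p D q / Kp n hs w p D q) ^ 2 / eps ^ 2 ->
    prob_draws n w (g * m * p)
      (within_eps hs p D q g m eps (Kp n hs w p D q))
      (within_eps_dec hs p D q g m eps (Kp n hs w p D q))
    >= 1 - delta.
Proof.
  exists (/ ln 2), 16.
  assert (Hln2 : 0 < ln 2) by (rewrite <- ln_1; apply ln_increasing; lra).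
  split; [apply Rinv_0_lt_compat; exact Hln2|]. split; [lra|].
  intros d n hs w r p D q eps delta g m Hw H1 _ _ _ _ _ Heps Hdel HK Hg Hm.
  eapply main_proof; eauto.
Qed.
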